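(* Let $0\leq\varepsilon\leq 1$ and let $G$ be a graph with $n$ vertices and $m$ edges such that $t(G)\leq \varepsilon (m/n)^3$. Then \[ \mu_n(G)\leq -(1-\varepsilon)\frac{4m^2}{n^3}. \]
   Context: All graphs are finite, simple and undirected. $t(G)$ is the number of triangles in $G$. $\mu_n(G)$ denotes the smallest eigenvalue of the adjacency matrix of $G$. *)

(* Defs.v *)
From HB Require Import structures.
From mathcomp Require Import all_boot all_order all_algebra.
From mathcomp Require Import reals.
Set Implicit Arguments. Unset Strict Implicit. Unset Printing Implicit Defensive.
Import Order.TTheory GRing.Theory Num.Theory.
Local Open Scope ring_scope.

Definition simple_graph (n : nat) (e : rel 'I_n) : Prop :=
  (forall x, ~~ e x x) /\ (forall x y, e x y = e y x).

Definition is_clique (n : nat) (e : rel 'I_n) (S : {set 'I_n}) : bool :=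
  [forall x in S, forall y in S, (x != y) ==> e x y].

Definition num_edges (n : nat) (e : rel 'I_n) : nat :=
  #|[set S : {set 'I_n} | (#|S| == 2)%N && is_clique e S]|.

Definition num_triangles (n : nat) (e : rel 'I_n) : nat :=
  #|[set S : {set 'I_n} | (#|S| == 3)%N && is_clique e S]|.

Definition adj_mx (R : realType) (n : nat) (e : rel 'I_n) : 'M[R]_n :=
  \matrix_(i, j) (e i j)%:R.

Definition is_smallest_eigenvalue (R : realType) (n : nat) (A : 'M[R]_n) (mu : R) : Prop :=
  eigenvalue A mu /\ (forall a : R, eigenvalue A a -> mu <= a).

(* Main.v *)
Require Import Defs.
From HB Require Import structures.
From mathcomp Require Import all_boot all_order all_algebra.
From mathcomp Require Import reals.
From mathcomp Require Import complex.
From mathcomp Require Import ring lra.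
Import Order.TTheory GRing.Theory Num.Theory.
Local Open Scope ring_scope.
Local Open Scope sesquilinear_scope.
Set Implicit Arguments. Unset Strict Implicit. Unset Printing Implicit Defensive.

Lemma toC_real (R : rcfType) (x : R) : (real_complex R x) \is Num.real.
Proof. by rewrite complex_real. Qed.

Lemma spec_setup (R : rcfType) n (A : 'M[R]_n) : A^T = A ->
  let B := map_mx (real_complex R) A in
  let P := spectralmx B in let d := spectral_diag B in
  [/\ P \is unitarymx, B = invmx P *m diag_mx d *m P & d \is a realmx].
Proof.
move=> sA B P d.
have hB : B \is hermsymmx.
  apply/is_hermitianmxP; rewrite expr0 scale1r; apply/matrixP=> i j.
  rewrite !mxE -{1}sA mxE; apply/esym/CrealP/toC_real.
split; first exact: spectral_unitarymx.
  by apply/orthomx_spectralP/hermitian_normalmx.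
exact: hermitian_spectral_diag_real.
Qed.
Lemma nz_row (C : nzRingType) n (w : 'rV[C]_n) : w != 0 -> exists i, w 0 i != 0.
Proof.
move=> w0; case: (pickP (fun i => w 0 i != 0)) => [i wi|h]; first by exists i.
case/eqP: w0; apply/rowP=> i; rewrite mxE; apply/eqP; by move: (h i) => /= /negbFE.
Qed.

Lemma eig_map (R : rcfType) n (A : 'M[R]_n) a :
  eigenvalue (map_mx (real_complex R) A) (real_complex R a) = eigenvalue A a.
Proof. by rewrite !eigenvalue_root_char -map_char_poly fmorph_root. Qed.

Lemma eig_diag (C : numClosedFieldType) n (P : 'M[C]_n) (d : 'rV[C]_n) c :
  P \is unitarymx ->
  eigenvalue (invmx P *m diag_mx d *m P) c <-> exists i, c = d 0 i.
Proof.
move=> uP; have Pu := unitarymx_unit uP.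
split.
  move=> /eigenvalueP [v hv v0].
  set w := v *m invmx P.
  have hw : w *m diag_mx d = c *: w.
    have := congr1 (mulmx^~ (invmx P)) hv; rewrite /= !mulmxA -(mulmxA _ P) (mulmxV Pu) mulmx1.
    by rewrite -scalemxAl.
  have w0 : w != 0.
    apply: contraNneq v0 => w0; by rewrite -(mulmxKV Pu v) -/w w0 mul0mx.
  have [i wi] : exists i, w 0 i != 0.
    exact: nz_row.
  clearbody w; exists i; move/rowP: hw => /(_ i); rewrite mul_mx_diag !mxE => /eqP.
  by rewrite mulrC -subr_eq0 -mulrBl mulf_eq0 (negPf wi) orbF subr_eq0 => /eqP.
move=> [i ->]; apply/eigenvalueP; exists (row i P).
  by rewrite -row_mul !mulmxA (mulmxV Pu) mul1mx row_mul row_diag_mx -scalemxAl -rowE.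
apply/eqP => h.
have : row i (P *m invmx P) = 0 by rewrite row_mul h mul0mx.
rewrite (mulmxV Pu) => /rowP /(_ i); rewrite !mxE eqxx /= => /eqP; by rewrite oner_eq0.
Qed.
Lemma tr_conj (C : fieldType) n (P M : 'M[C]_n) : P \in unitmx ->
  \tr (invmx P *m M *m P) = \tr M.
Proof. by move=> Pu; rewrite mxtrace_mulC mulmxA (mulmxV Pu) mul1mx. Qed.

Lemma conj_pow (C : numClosedFieldType) n (P D : 'M[C]_n) : P \in unitmx ->
  let B := invmx P *m D *m P in
  B *m B = invmx P *m (D *m D) *m P /\ B *m B *m B = invmx P *m (D *m D *m D) *m P.
Proof.
move=> Pu B; have e : forall X Y, (invmx P *m X *m P) *m (invmx P *m Y *m P) = invmx P *m (X *m Y) *m P.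
  move=> X Y; by rewrite !mulmxA -(mulmxA _ P) (mulmxV Pu) mulmx1.
by split; rewrite /B ?e // e e.
Qed.

Lemma tr_diag1 (C : pzRingType) n (d : 'rV[C]_n) : \tr (diag_mx d) = \sum_i d 0 i.
Proof. by apply: eq_bigr => i _; rewrite mxE eqxx mulr1n. Qed.

Lemma tr_diag2 (C : pzRingType) n (d : 'rV[C]_n) :
  \tr (diag_mx d *m diag_mx d) = \sum_i d 0 i ^+ 2.
Proof. by apply: eq_bigr => i _; rewrite mul_diag_mx !mxE eqxx mulr1n expr2. Qed.

Lemma tr_diag3 (C : pzRingType) n (d : 'rV[C]_n) :
  \tr (diag_mx d *m diag_mx d *m diag_mx d) = \sum_i d 0 i ^+ 3.
Proof.
by apply: eq_bigr => i _; rewrite -mulmxA [diag_mx d *m diag_mx d]mul_diag_mx mul_diag_mx !mxE eqxx mulr1n !exprS expr0 mulr1.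
Qed.
Lemma rayleigh (C : numClosedFieldType) n (P : 'M[C]_n) (d u : 'rV[C]_n) M :
  P \is unitarymx -> (forall i, d 0 i <= M) ->
  (u *m (invmx P *m diag_mx d *m P) *m u^t*) 0 0 <= M * (u *m u^t*) 0 0.
Proof.
move=> uP hd; have Pu := unitarymx_unit uP.
have ht : (u *m P^t*)^t* = P *m u^t*.
  by rewrite !trmx_mul !map_mxM trmxCK.
have e1 : u *m (invmx P *m diag_mx d *m P) *m u^t* = (u *m P^t*) *m diag_mx d *m (u *m P^t*)^t*.
  by rewrite ht (invmx_unitary uP) !mulmxA.
have e2 : u *m u^t* = (u *m P^t*) *m (u *m P^t*)^t*.
  by rewrite ht -(invmx_unitary uP) mulmxA -(mulmxA u) (mulVmx Pu) mulmx1.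
rewrite e1 e2; move: (u *m P^t*) => w.
rewrite !mxE mulr_sumr; apply: ler_sum => i _.
rewrite mul_mx_diag !mxE -mulrA mulrCA mulrA.
by rewrite -mulrA; apply: ler_wpM2r; [exact: mul_conjC_ge0 | exact: hd].
Qed.
Lemma sum_bool_card (T : finType) (a : pred T) : (\sum_x (a x : nat))%N = #|a|.
Proof.
rewrite -sum1_card [RHS]big_mkcond /=; apply: eq_bigr => x _.
by rewrite unfold_in; case: (a x).
Qed.

Lemma sum_set_card (T : finType) (A : {set T}) : (\sum_x ((x \in A) : nat))%N = #|A|.
Proof. by rewrite sum_bool_card; apply: eq_card. Qed.

Lemma sum_b_eq (T : finType) (X : T) : (\sum_x ((x == X) : nat))%N = 1%N.
Proof. by rewrite (@sum_bool_card _ (pred1 X)) card1. Qed.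

Lemma count2 (T : finType) (S : {set T}) :
  (\sum_i \sum_j ((i \in S) && (j \in S :\ i) : nat))%N = (#|S| * (#|S| - 1))%N.
Proof.
transitivity (\sum_i ((i \in S) : nat) * (#|S| - 1))%N.
  apply: eq_bigr => i _; case iS: (i \in S) => /=; last by rewrite big1.
  by rewrite mul1n sum_set_card (cardsD1 i S) iS add1n subn1.
by rewrite -big_distrl /= sum_bool_card.
Qed.

Lemma count3 (T : finType) (S : {set T}) :
  (\sum_i \sum_j \sum_k ((i \in S) && (j \in S :\ i) && (k \in S :\ i :\ j)  : nat))%N
  = (#|S| * (#|S| - 1) * (#|S| - 2))%N.
Proof.
transitivity (\sum_i \sum_j ((i \in S) && (j \in S :\ i) : nat) * (#|S| - 2))%N.
  apply: eq_bigr => i _; apply: eq_bigr => j _.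
  case h: ((i \in S) && (j \in S :\ i)) => /=; last by rewrite big1.
  case/andP: h => iS jS.
  rewrite mul1n sum_set_card (cardsD1 i S) iS (cardsD1 j (S :\ i)) jS.
  by rewrite !add1n !subSS subn0.
rewrite -(@count2 _ S) big_distrl /=; apply: eq_bigr => i _.
by rewrite big_distrl.
Qed.
Set Implicit Arguments. Unset Strict Implicit. Unset Printing Implicit Defensive.
Lemma card3 (T : finType) (i j k : T) : i != j -> j != k -> k != i -> #|[set i; j; k]| = 3%N.
Proof.
move=> ij jk ki.
rewrite -setUA cardsU1 cards2 jk !inE negb_or ij eq_sym ki.
by [].
Qed.
Lemma is_cliqueP n (e : rel 'I_n) (S : {set 'I_n}) :
  reflect (forall x y, x \in S -> y \in S -> x != y -> e x y) (is_clique e S).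
Proof.
apply: (iffP idP).
  move=> /forall_inP h x y xS yS xy; have /forall_inP := h x xS.
  by move=> /(_ y yS) /implyP; apply.
move=> h; apply/forall_inP => x xS; apply/forall_inP => y yS; apply/implyP.
exact: h.
Qed.

Lemma edge_ne n (e : rel 'I_n) x y : simple_graph e -> e x y -> x != y.
Proof. by move=> [irr _] exy; apply: contraTneq exy => ->; rewrite (negPf (irr y)). Qed.

Lemma edge_pt n (e : rel 'I_n) (S : {set 'I_n}) i j : simple_graph e ->
  ((#|S| == 2)%N && is_clique e S) && ((i \in S) && (j \in S :\ i))
  = e i j && (S == [set i; j]).
Proof.
move=> g; have [irr sym] := g.
apply/idP/idP.
  case/andP=> /andP[cS /is_cliqueP cl] /andP[iS /setD1P[ji jS]].
  have eij : e i j by apply: cl => //; rewrite eq_sym.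
  rewrite eij /= eq_sym eqEcard cards2 (eqP cS) eq_sym ji andbT.
  by apply/subsetP => x; rewrite !inE => /orP[] /eqP ->.
case/andP=> eij /eqP ->; have ij := edge_ne g eij.
rewrite cards2 ij /= !inE eqxx /= eq_sym ij eqxx /= orbT andbT.
apply/is_cliqueP => x y; rewrite !inE => /orP[] /eqP -> /orP[] /eqP -> //;
  rewrite ?eqxx // => _; by rewrite sym.
Qed.

Lemma tri_pt n (e : rel 'I_n) (S : {set 'I_n}) i j k : simple_graph e ->
  ((#|S| == 3)%N && is_clique e S) && ((i \in S) && (j \in S :\ i) && (k \in S :\ i :\ j))
  = [&& e i j, e j k & e k i] && (S == [set i; j; k]).
Proof.
move=> g; have [irr sym] := g.
apply/idP/idP.
  case/andP=> /andP[cS /is_cliqueP cl] /andP[/andP[iS /setD1P[ji jS]] /setD1P[kj /setD1P[ki kS]]].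
  have eij : e i j by apply: cl => //; rewrite eq_sym.
  have ejk : e j k by apply: cl => //; rewrite eq_sym.
  have eki : e k i by apply: cl.
  rewrite eij ejk eki /= eq_sym eqEcard (eqP cS).
  rewrite card3 //; [|by rewrite eq_sym|by rewrite eq_sym].
  rewrite andbT.
  by apply/subsetP => x; rewrite !inE => /orP[/orP[]|] /eqP ->.
case/andP=> /and3P[eij ejk eki] /eqP ->.
have ij := edge_ne g eij; have jk := edge_ne g ejk; have ki := edge_ne g eki.
rewrite card3 //.
rewrite /= !inE !eqxx /= !orbT /= eq_sym ij /= eq_sym jk ki /= andbT.
apply/is_cliqueP => x y; rewrite !inE => /orP[/orP[]|] /eqP -> /orP[/orP[]|] /eqP -> //;
  rewrite ?eqxx // => _; by rewrite // sym.
Qed.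
Lemma edges_count n (e : rel 'I_n) : simple_graph e ->
  (\sum_i \sum_j (e i j : nat))%N = (2 * num_edges e)%N.
Proof.
move=> g; rewrite /num_edges -sum_set_card big_distrr /=.
transitivity (\sum_(S : {set 'I_n}) \sum_i \sum_j
   (((#|S| == 2)%N && is_clique e S) && ((i \in S) && (j \in S :\ i)) : nat))%N; last first.
  apply: eq_bigr => S _; rewrite inE.
  case h: ((#|S| == 2)%N && is_clique e S) => /=; last by rewrite muln0 big1 // => i _; rewrite big1.
  by rewrite count2 (eqP (proj1 (andP h))).
rewrite [RHS]exchange_big /=; apply: eq_bigr => i _.
rewrite [RHS]exchange_big /=; apply: eq_bigr => j _.
under eq_bigr => S _ do rewrite edge_pt //.
case: (e i j) => /=; last by rewrite big1.
by rewrite sum_b_eq.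
Qed.

Lemma tri_count n (e : rel 'I_n) : simple_graph e ->
  (\sum_i \sum_j \sum_k ([&& e i j, e j k & e k i] : nat))%N = (6 * num_triangles e)%N.
Proof.
move=> g; rewrite /num_triangles -sum_set_card big_distrr /=.
transitivity (\sum_(S : {set 'I_n}) \sum_i \sum_j \sum_k
   (((#|S| == 3)%N && is_clique e S) && ((i \in S) && (j \in S :\ i) && (k \in S :\ i :\ j)) : nat))%N; last first.
  apply: eq_bigr => S _; rewrite inE.
  case h: ((#|S| == 3)%N && is_clique e S) => /=; last first.
    by rewrite muln0 big1 // => i _; rewrite big1 // => j _; rewrite big1.
  by rewrite count3 (eqP (proj1 (andP h))).
rewrite [RHS]exchange_big /=; apply: eq_bigr => i _.
rewrite [RHS]exchange_big /=; apply: eq_bigr => j _.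
rewrite [RHS]exchange_big /=; apply: eq_bigr => k _.
under eq_bigr => S _ do rewrite tri_pt //.
case: [&& e i j, e j k & e k i] => /=; last by rewrite big1.
by rewrite sum_b_eq.
Qed.
Require Import Defs.
From HB Require Import structures.
From mathcomp Require Import all_boot all_order all_algebra.
From mathcomp Require Import reals.
From mathcomp Require Import complex.
From mathcomp Require Import ring lra.
Import Order.TTheory GRing.Theory Num.Theory.
Local Open Scope ring_scope.
Local Open Scope sesquilinear_scope.
Set Implicit Arguments. Unset Strict Implicit. Unset Printing Implicit Defensive.
Lemma ex_min (R : realDomainType) n (r : 'I_n -> R) : (0 < n)%N -> exists i, forall j, r i <= r j.
Proof.
move=> n0; case: (@Order.TotalTheory.arg_minP _ _ _ (Ordinal n0) xpredT r isT) => i _ h.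
by exists i => j; apply: h.
Qed.
Lemma ex_max (R : realDomainType) n (r : 'I_n -> R) : (0 < n)%N -> exists i, forall j, r j <= r i.
Proof.
move=> n0; case: (@Order.TotalTheory.arg_maxP _ _ _ (Ordinal n0) xpredT r isT) => i _ h.
by exists i => j; apply: h.
Qed.
Lemma spec_ex (R : rcfType) n (A : 'M[R]_n) : A^T = A ->
  exists P d, [/\ P \is unitarymx, map_mx (real_complex R) A = invmx P *m diag_mx d *m P
     & forall i, real_complex R (complex.Re (d 0 i)) = d 0 i].
Proof.
move=> sA; have [uP hB dr] := spec_setup sA.
exists (spectralmx (map_mx (real_complex R) A)), (spectral_diag (map_mx (real_complex R) A)).
split => // i; apply: RRe_real; exact: (mxOverP dr).
Qed.

Lemma ray_real (R : rcfType) n (A : 'M[R]_n) P d M : P \is unitarymx ->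
  map_mx (real_complex R) A = invmx P *m diag_mx d *m P ->
  (forall i, d 0 i <= real_complex R M) ->
  \sum_i \sum_j A i j <= M * n%:R.
Proof.
move=> uP hB hd.
have := rayleigh (const_mx 1) uP hd; rewrite -hB.
have -> : (const_mx 1 : 'rV[R[i]]_n) ^t* = (const_mx 1)^T.
  by apply/matrixP => i j; rewrite !mxE conjC1.
rewrite !mxE.
under eq_bigr => j _ do rewrite !mxE mulr1.
under eq_bigr => j _ do (under eq_bigr => i _ do rewrite !mxE mul1r).
under [X in _ <= _ * X]eq_bigr => j _ do rewrite !mxE mulr1.
rewrite -!rmorph_sum sumr_const card_ord.
under eq_bigr => j _ do rewrite -rmorph_sum.
by rewrite -rmorph_sum -rmorphM lecR exchange_big.
Qed.
Lemma tr_spec (R : rcfType) n (A : 'M[R]_n) P d (r : 'I_n -> R) : P \is unitarymx ->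
  map_mx (real_complex R) A = invmx P *m diag_mx d *m P ->
  (forall i, real_complex R (r i) = d 0 i) ->
  [/\ \tr A = \sum_i r i, \tr (A *m A) = \sum_i r i ^+ 2
    & \tr (A *m A *m A) = \sum_i r i ^+ 3].
Proof.
move=> uP hB hr; have Pu := unitarymx_unit uP.
have [h2 h3] := conj_pow (diag_mx d) Pu.
split; apply: (fmorph_inj (real_complex R)); rewrite -trace_map_mx ?map_mxM hB.
- by rewrite tr_conj // tr_diag1 rmorph_sum; apply: eq_bigr => i _; exact: (esym (hr i)).
- by rewrite h2 tr_conj // tr_diag2 rmorph_sum; apply: eq_bigr => i _; rewrite -hr rmorphXn.
- by rewrite h3 tr_conj // tr_diag3 rmorph_sum; apply: eq_bigr => i _; rewrite -hr rmorphXn.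
Qed.

Lemma tr_adj1 (R : realType) n (e : rel 'I_n) : simple_graph e -> \tr (adj_mx R e) = 0.
Proof.
move=> [irr _]; apply: big1 => i _; by rewrite mxE (negPf (irr i)).
Qed.

Lemma tr_adj2 (R : realType) n (e : rel 'I_n) : simple_graph e ->
  \tr (adj_mx R e *m adj_mx R e) = ((\sum_i \sum_j (e i j : nat))%N)%:R.
Proof.
move=> [_ sym]; rewrite natr_sum; apply: eq_bigr => i _.
rewrite mxE natr_sum; apply: eq_bigr => j _.
by rewrite !mxE sym; case: (e j i); rewrite ?mulr1 ?mulr0.
Qed.

Lemma tr_adj3 (R : realType) n (e : rel 'I_n) : simple_graph e ->
  \tr (adj_mx R e *m adj_mx R e *m adj_mx R e) =
  ((\sum_i \sum_j \sum_k ([&& e i j, e j k & e k i] : nat))%N)%:R.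
Proof.
move=> _; rewrite natr_sum; apply: eq_bigr => i _.
set A := adj_mx R e.
rewrite mxE (eq_bigr (fun k => \sum_j A i j * A j k * A k i)); last first.
  by move=> k _; rewrite mxE mulr_suml.
rewrite exchange_big /= natr_sum; apply: eq_bigr => j _.
rewrite natr_sum; apply: eq_bigr => k _.
by rewrite !mxE; case: (e i j); case: (e j k); case: (e k i); rewrite /= ?mulr1 ?mulr0 ?mul0r.
Qed.
Lemma final_alg (R : realFieldType) n (r : 'I_n -> R) (m tt eps N mu M : R) imax :
  0 < N -> 0 <= m -> 0 <= eps -> \sum_i r i ^+ 2 = 2 * m -> \sum_i r i ^+ 3 = 6 * tt ->
  2 * m <= M * N -> (forall i, mu <= r i) -> r imax = M -> mu <= 0 ->
  tt <= eps * (m / N) ^+ 3 -> mu <= - ((1 - eps) * (4 * m ^+ 2 / N ^+ 3)).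
Proof.
move=> N0 m0 eps0 h2 h3 ray hmu hM mu0 ht.
have key : M ^+ 3 <= 6 * tt - mu * (2 * m).
  have -> : 6 * tt - mu * (2 * m) = \sum_i r i ^+ 2 * (r i - mu).
    rewrite -h2 -h3 mulr_sumr -sumrB; apply: eq_bigr => i _; ring.
  rewrite (bigD1 imax) //= hM.
  have h0 : 0 <= \sum_(i | i != imax) r i ^+ 2 * (r i - mu).
    apply: sumr_ge0 => i _; apply: mulr_ge0; first exact: sqr_ge0.
    by rewrite subr_ge0.
  have hM2 : 0 <= M ^+ 2 by exact: sqr_ge0.
  have : 0 <= M ^+ 2 * (- mu) by apply: mulr_ge0; lra.
  have -> : M ^+ 3 = M ^+ 2 * M by ring.
  nra.
have [m00|mpos] := eqVneq m 0.
  by rewrite m00 expr0n /= mulr0 mul0r mulr0 oppr0.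
have mp : 0 < m by rewrite lt0r mpos.
set x := m / N.
have x0 : 0 < x by apply: divr_gt0.
have Mx : 2 * x <= M.
  by rewrite /x mulrA ler_pdivrMr.
have M3 : 8 * x ^+ 3 <= M ^+ 3.
  have : (2 * x) ^+ 3 <= M ^+ 3 by apply: lerXn2r; rewrite ?nnegrE; lra.
  have e8 : (2 * x) ^+ 3 = 8 * x ^+ 3 by ring.
  lra.
have ex : 0 <= eps * x ^+ 3 by apply: mulr_ge0 => //; apply: exprn_ge0; lra.
have e2 : - ((1 - eps) * (4 * m ^+ 2 / N ^+ 3)) * (2 * m) = 8 * (eps * x ^+ 3) - 8 * x ^+ 3.
  rewrite /x; field; lra.
rewrite -(ler_pM2r (_ : 0 < 2 * m)); last lra.
rewrite e2.
move: key ht M3 ex; rewrite -/x.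
move: (eps * x ^+ 3) (x ^+ 3) (M ^+ 3) (mu * (2 * m)) => a b c w.
lra.
Qed.
Local Close Scope sesquilinear_scope.

Theorem corollary4 (R : realType) (n : nat) (e : rel 'I_n) (eps : R) :
  (0 < n)%N -> simple_graph e -> 0 <= eps -> eps <= 1 ->
  (num_triangles e)%:R <= eps * ((num_edges e)%:R / n%:R) ^+ 3 ->
  exists mu : R, is_smallest_eigenvalue (adj_mx R e) mu /\
    mu <= - ((1 - eps) * (4 * (num_edges e)%:R ^+ 2 / n%:R ^+ 3)).
Proof.
move=> n0 g eps0 eps1 ht.
set A := adj_mx R e.
have sA : A^T = A by apply/matrixP => i j; rewrite !mxE (proj2 g).
have [P [d [uP hB hr]]] := spec_ex sA.
pose r := fun i => complex.Re (d 0 i).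
have hr' : forall i, real_complex R (r i) = d 0 i by exact: hr.
have eig : forall a, eigenvalue A a <-> exists i, a = r i.
  move=> a; rewrite -eig_map hB; split.
    move/(@eig_diag _ _ P d (real_complex R a) uP) => [i hi]; exists i.
    by apply: complexI; rewrite hi -hr'.
  move=> [i ->]; apply/(@eig_diag _ _ P d _ uP); exists i; by rewrite hr'.
have [imin hmin] := ex_min r n0.
have [imax hmax] := ex_max r n0.
exists (r imin); split.
  split; first by apply/eig; exists imin.
  by move=> a /eig [i ->]; exact: hmin.
have [t1 t2 t3] := tr_spec uP hB hr'.
rewrite tr_adj1 // in t1.
rewrite tr_adj2 // edges_count // in t2.
rewrite tr_adj3 // tri_count // in t3.
have hd : forall i, d 0 i <= real_complex R (r imax).
  move=> i; rewrite -hr' lecR; exact: hmax.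
have ray := ray_real uP hB hd.
have sA2 : \sum_i \sum_j A i j = (2 * num_edges e)%:R.
  rewrite -edges_count // natr_sum; apply: eq_bigr => i _.
  by rewrite natr_sum; apply: eq_bigr => j _; rewrite mxE.
rewrite sA2 in ray.
have mu0 : r imin <= 0.
  have : \sum_(i < n) r imin <= \sum_i r i by apply: ler_sum => i _; exact: hmin.
  rewrite -t1 sumr_const card_ord.
  by rewrite pmulrn_lle0.
apply: (@final_alg R n r _ (num_triangles e)%:R eps n%:R (r imin) (r imax) imax) => //.
- by rewrite ltr0n.
- by rewrite -t2 natrM.
- by rewrite -t3 natrM.
- by rewrite -natrM.
Qed.
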